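(* Let $B$ be the simplicial $2$-sphere obtained from the bipyramid (the triangulation of $S^2$ with $5$ vertices and $6$ triangles) by a stellar subdivision of each of its $6$ triangles (adding a new vertex inside each triangle and joining it to the three vertices of that triangle), so that $f(B)=18$. Then $B$ has no winning strategy for the coloring game: in any play at most $4$ edges become red, hence at most $4<18/4$ triangles become green.
   Context: Coloring game on a simplicial $2$-sphere $B$: (1) choose one or two vertices of $B$ and color them red; (2) choose an edge of $B$ both of whose endpoints are currently uncolored and which, together with some already red vertex, spans a triangle of $B$; color the edge and its two endpoints red and color that triangle green. Step (2) may be repeated as long as possible. $B$ has a winning strategy if some admissible sequence of moves produces at least $f(B)/4$ green triangles, where $f(B)$ is the number of triangles of $B$. *)

(* Defs.v *)
From mathcomp Require Import all_boot.
Set Implicit Arguments. Unset Strict Implicit. Unset Printing Implicit Defensive.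

Section Game.
Variable T : finType.

(* A simplicial 2-sphere is given by its set of triangles K (each a 3-subset of T);
   edges of K are the 2-subsets of triangles of K. *)

Definition move_ok (K : {set {set T}}) (red : {set T}) (m : T * T * T) : bool :=
  let: (u, v, w) := m in
  [&& u \notin red, v \notin red, w \in red & [set u; v; w] \in K].

Fixpoint play_ok (K : {set {set T}}) (red : {set T}) (ms : seq (T * T * T)) : bool :=
  match ms with
  | [::] => true
  | m :: ms' =>
      let: (u, v, w) := m in
      move_ok K red m && play_ok K (u |: (v |: red)) ms'
  end.

Definition green (ms : seq (T * T * T)) : {set {set T}} :=
  [set (let: (u, v, w) := m in [set u; v; w]) | m in ms].

(* B has a winning strategy: some admissible play (step (1) with one or two
   red vertices, then step (2) moves) yields at least f(B)/4 green triangles. *)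
Definition winning (K : {set {set T}}) : Prop :=
  exists (S : {set T}) (ms : seq (T * T * T)),
    [/\ 1 <= #|S| <= 2, play_ok K S ms & #|K| <= 4 * #|green ms|].
End Game.

(* The bipyramid: apexes 0,1, equator 2,3,4; triangles
   (0,2,3),(0,3,4),(0,4,2),(1,2,3),(1,3,4),(1,4,2).
   Stellar subdivision of each with new vertices 5,6,7,8,9,10 respectively. *)
Definition tri (x y z : nat) : {set 'I_11} := [set inord x; inord y; inord z].

Definition stellar_bipyramid : {set {set 'I_11}} :=
  [set:: [:: tri 5 0 2; tri 5 0 3; tri 5 2 3;
             tri 6 0 3; tri 6 0 4; tri 6 3 4;
             tri 7 0 4; tri 7 0 2; tri 7 4 2;
             tri 8 1 2; tri 8 1 3; tri 8 2 3;
             tri 9 1 3; tri 9 1 4; tri 9 3 4;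
             tri 10 1 4; tri 10 1 2; tri 10 4 2]].

(* Main.v *)
Require Import Defs.
From mathcomp Require Import all_boot.
Definition code (t : {set 'I_11}) : seq bool := [seq (inord i : 'I_11) \in t | i <- iota 0 11].
Definition L : seq (nat * nat * nat) :=
  [:: (5,0,2); (5,0,3); (5,2,3); (6,0,3); (6,0,4); (6,3,4); (7,0,4); (7,0,2); (7,4,2);
      (8,1,2); (8,1,3); (8,2,3); (9,1,3); (9,1,4); (9,3,4); (10,1,4); (10,1,2); (10,4,2)].
Definition trip (p : nat * nat * nat) := tri p.1.1 p.1.2 p.2.
Definition code' (p : nat * nat * nat) : seq bool :=
  [seq (i == p.1.1) || (i == p.1.2) || (i == p.2) | i <- iota 0 11].
Lemma SL : stellar_bipyramid = [set:: map trip L]. Proof. reflexivity. Qed.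
Lemma eqI (i j : nat) : i < 11 -> j < 11 -> (inord i == inord j :> 'I_11) = (i == j).
Proof. by move=> hi hj; rewrite -val_eqE /= !inordK. Qed.
Lemma codeE p : p \in L -> code (trip p) = code' p.
Proof.
move=> pL; have : (p.1.1 < 11) && (p.1.2 < 11) && (p.2 < 11).
  by move: p pL; apply/allP; vm_compute.
case/andP=> /andP[h1 h2] h3.
apply/eq_in_map => i; rewrite mem_iota add0n => /andP[_ hi].
by rewrite /trip /tri !inE !eqI.
Qed.
Lemma cardK : #|stellar_bipyramid| = 18.
Proof.
rewrite SL cardsE. apply/card_uniqP. apply: (@map_uniq _ _ code).
rewrite -map_comp (_ : map _ _ = map code' L).
  by vm_compute.
by apply/eq_in_map => p pL /=; rewrite codeE.
Qed.

Definition orig : {set 'I_11} := [set x : 'I_11 | x < 5].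

Lemma card_orig : #|orig| <= 5.
Proof.
have h : 5 <= 11 by [].
apply: (@leq_trans #|[set widen_ord h i | i : 'I_5]|); last first.
  by rewrite (leq_trans (leq_imset_card _ _)) // card_ord.
apply: subset_leq_card; apply/subsetP => x; rewrite inE => hx.
by apply/imsetP; exists (Ordinal hx) => //; apply: val_inj.
Qed.

Lemma triP (a b c u v w : 'I_11) : 5 <= a -> b < 5 -> c < 5 -> b != c ->
  [set u; v; w] = [set a; b; c] ->
  ((u < 5) || (v < 5)) && (2 <= #|orig :&: [set a; b; c]|).
Proof.
move=> ha hb hc hbc E; apply/andP; split; last first.
  apply: (@leq_trans #|[set b; c]|); first by rewrite cards2 hbc.
  apply: subset_leq_card; apply/subsetP => x.
  by rewrite !inE => /orP[]/eqP->; rewrite ?hb ?hc ?eqxx ?orbT.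
apply/negPn/negP; rewrite negb_or -!leqNgt => /andP[hu hv].
have ina : forall x, x \in [set a; b; c] -> 5 <= x -> x = a.
  move=> x; rewrite !inE => /orP[/orP[]|]/eqP-> // h.
    by move: (leq_trans h hb); rewrite ltnn.
  by move: (leq_trans h hc); rewrite ltnn.
have eu : u = a by apply: ina => //; rewrite -E !inE eqxx.
have ev : v = a by apply: ina => //; rewrite -E !inE eqxx orbT.
have nba : b != a by apply/negP => /eqP ba; move: hb; rewrite ba ltnNge ha.
have nca : c != a by apply/negP => /eqP ca; move: hc; rewrite ca ltnNge ha.
have : b \in [set u; v; w] by rewrite E !inE eqxx orbT.
have : c \in [set u; v; w] by rewrite E !inE eqxx !orbT.
rewrite eu ev !inE (negbTE nba) (negbTE nca) /= => /eqP cw /eqP bw.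
by move: hbc; rewrite bw cw eqxx.
Qed.

Lemma memK t : t \in stellar_bipyramid -> exists2 p, p \in L & t = trip p.
Proof. by rewrite SL inE => /mapP. Qed.

Lemma moveP (u v w : 'I_11) : [set u; v; w] \in stellar_bipyramid ->
  ((u < 5) || (v < 5)) && (2 <= #|orig :&: [set u; v; w]|).
Proof.
case/memK => p pL E; rewrite E.
have : [&& 5 <= p.1.1 < 11, p.1.2 < 5, p.2 < 5 & p.1.2 != p.2].
  by move: p pL {E}; apply/allP; vm_compute.
case/and4P => /andP[h1 h1'] h2 h3 h4.
apply: triP E.
- by rewrite inordK.
- by rewrite inordK // (leq_trans h2).
- by rewrite inordK // (leq_trans h3).
- by rewrite -val_eqE /= !inordK // ?(leq_trans h2) ?(leq_trans h3).
Qed.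

Lemma playL red ms : play_ok stellar_bipyramid red ms -> size ms <= #|orig :\: red|.
Proof.
elim: ms red => [|[[u v] w] ms IH] red //= /andP[/and4P[hu hv hw hK] hp].
apply: leq_ltn_trans (IH _ hp) _; apply: proper_card; apply/properP; split.
  by apply: setDS; rewrite setUA subsetUr.
case/andP: (moveP _ _ _ hK) => /orP[h|h] _.
  by exists u; rewrite !inE ?h ?hu ?eqxx.
by exists v; rewrite !inE ?h ?hv ?eqxx ?orbT.
Qed.

Theorem mainTheorem13 :
  #|stellar_bipyramid| = 18 /\
  (forall (S : {set 'I_11}) (ms : seq ('I_11 * 'I_11 * 'I_11)),
      1 <= #|S| <= 2 -> play_ok stellar_bipyramid S ms ->
      size ms <= 4 /\ #|green ms| <= 4) /\
  ~ winning stellar_bipyramid.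
Proof.
have gr : forall ms : seq ('I_11 * 'I_11 * 'I_11), #|green ms| <= size ms.
  by move=> ms; rewrite /green (leq_trans (leq_imset_card _ _)) // card_size.
have H2 : forall (S : {set 'I_11}) (ms : seq ('I_11 * 'I_11 * 'I_11)),
      1 <= #|S| <= 2 -> play_ok stellar_bipyramid S ms ->
      size ms <= 4 /\ #|green ms| <= 4.
  move=> S ms _ hp.
  suff hs : size ms <= 4 by split => //; apply: leq_trans (gr ms) hs.
  case: ms hp => [|[[u v] w] ms] //= /andP[/and4P[hu hv hw hK] hp].
  have := playL _ _ hp; case/andP: (moveP _ _ _ hK) => _ h2 hs.
  rewrite ltnS (leq_trans hs) //.
  apply: (@leq_trans #|orig :\: [set u; v; w]|).
    apply: subset_leq_card; apply: setDS; apply/subsetP => x.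
    by rewrite !inE => /orP[/orP[]|] /eqP ->; rewrite ?eqxx ?hw ?orbT.
  rewrite cardsD; apply: (@leq_trans (5 - 2)); last by [].
  by apply: leq_sub; [exact: card_orig | exact: h2].
split; first exact: cardK.
split; first exact: H2.
case=> S [ms [hS hp hw]].
have [_ h4] := H2 S ms hS hp.
by move: hw; rewrite cardK => /leq_trans /(_ (leq_mul (leqnn 4) h4)).
Qed.
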